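(* Let $\lambda=\lambda(d)>0$ be any function of $d$ that is bounded above by a constant. Then there is a function $\varepsilon(d)\to0$ as $d\to\infty$ such that for every $d$ and every triangle-free graph $G$ on $n$ vertices with maximum degree $d$, \[ \frac1n\overline\alpha_G(\lambda)\;\ge\;(1-\varepsilon(d))\,\alpha_{T_d}(\lambda). \]
   Context: For a graph $G$ and $\lambda>0$, $\overline\alpha_G(\lambda)=\lambda P_G'(\lambda)/P_G(\lambda)$ where $P_G(\lambda)=\sum_J\lambda^{|J|}$ over all independent sets $J$ of $G$; it is the expected size of an independent set drawn from the hard-core model $\Pr[J]=\lambda^{|J|}/P_G(\lambda)$. For an integer $d\ge2$ and $\lambda>0$, $\alpha_{T_d}(\lambda)$ denotes the unique solution $\alpha\in(0,1/2)$ of $\lambda=\frac{\alpha}{1-\alpha}\left(\frac{1-\alpha}{1-2\alpha}\right)^d$. *)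

(* Defs.v *)
From Stdlib Require Import Reals.
From mathcomp Require Import all_boot.
Open Scope R_scope.
Set Implicit Arguments. Unset Strict Implicit. Unset Printing Implicit Defensive.

Definition simple_graph (V : finType) (e : rel V) : Prop :=
  (forall x y, e x y = e y x) /\ (forall x, e x x = false).

Definition triangle_free (V : finType) (e : rel V) : Prop :=
  forall x y z, e x y -> e y z -> e x z -> False.

Definition deg (V : finType) (e : rel V) (v : V) : nat := #|[set w | e v w]|.

Definition max_degree_eq (V : finType) (e : rel V) (d : nat) : Prop :=
  (forall v, (deg e v <= d)%N) /\ (exists v, deg e v = d).

Definition independent (V : finType) (e : rel V) (J : {set V}) : bool :=
  [forall x in J, forall y in J, ~~ e x y].

Definition indep_poly (V : finType) (e : rel V) (lam : R) : R :=
  \big[Rplus/R0]_(J | independent e J) (pow lam #|J|).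

(* lam * P_G'(lam), computed termwise: sum over independent J of |J| lam^|J| *)
Definition lam_dindep_poly (V : finType) (e : rel V) (lam : R) : R :=
  \big[Rplus/R0]_(J | independent e J) (Rmult (INR #|J|) (pow lam #|J|)).

Definition avg_alpha (V : finType) (e : rel V) (lam : R) : R :=
  (lam_dindep_poly e lam / indep_poly e lam).

(* a is the (unique) solution in (0,1/2) of
   lam = a/(1-a) * ((1-a)/(1-2a))^d, i.e. a = alpha_{T_d}(lam). *)
Definition is_alpha_T (d : nat) (lam a : R) : Prop :=
  (0 < a < / 2) /\ lam = (a / (1 - a) * pow ((1 - a) / (1 - 2 * a)) d).

(* Main.v *)
Require Import Defs.
From HB Require Import structures.
From Stdlib Require Import Reals.
From Stdlib Require Import Lra Lia ClassicalEpsilon.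
From mathcomp Require Import all_boot.
Open Scope R_scope.
Set Implicit Arguments. Unset Strict Implicit. Unset Printing Implicit Defensive.

Lemma Rplus_assoc' : associative Rplus.
Proof. move=> x y z; by rewrite Rplus_assoc. Qed.
Lemma Rmult_assoc' : associative Rmult.
Proof. move=> x y z; by rewrite Rmult_assoc. Qed.
HB.instance Definition _ := Monoid.isComLaw.Build R R0 Rplus Rplus_assoc' Rplus_comm Rplus_0_l.
HB.instance Definition _ := Monoid.isComLaw.Build R R1 Rmult Rmult_assoc' Rmult_comm Rmult_1_l.
HB.instance Definition _ := Monoid.isMulLaw.Build R R0 Rmult Rmult_0_l Rmult_0_r.
HB.instance Definition _ := Monoid.isAddLaw.Build R Rmult Rplus Rmult_plus_distr_r Rmult_plus_distr_l.

Section Comb.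
Variables (V : finType) (e : rel V).
Hypothesis sym : forall x y, e x y = e y x.
Hypothesis irr : forall x, e x x = false.
Hypothesis tf : forall x y z, e x y -> e y z -> e x z -> False.
Variable lam : R.

Definition unc (J : {set V}) u := [forall x in J, ~~ e u x].
Definition w (J : {set V}) := pow lam #|J|.

Lemma uncU1 (J : {set V}) (u x : V) : unc (u |: J) x = ~~ e x u && unc J x.
Proof.
apply/idP/idP.
- move/forallP=> H; apply/andP; split.
  + by have := H u; rewrite setU11.
  + apply/forallP=> y; apply/implyP=> yJ; have := H y; rewrite !inE yJ orbT; done.
- case/andP=> Hu /forallP H; apply/forallP=> y; apply/implyP; rewrite !inE.
  case/orP=> [/eqP->|yJ] //; exact: (implyP (H y) yJ).
Qed.

Lemma indepU1 (J : {set V}) (u : V) : u \notin J -> independent e (u |: J) = independent e J && unc J u.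
Proof.
move=> uJ; apply/idP/idP.
- move/forallP=> H; apply/andP; split.
  + apply/forallP=> x; apply/implyP=> xJ; apply/forallP=> y; apply/implyP=> yJ.
    have := H x; rewrite !inE xJ orbT /= => /forallP/(_ y); rewrite !inE yJ orbT; done.
  + apply/forallP=> y; apply/implyP=> yJ.
    have := H u; rewrite setU11 /= => /forallP/(_ y); rewrite !inE yJ orbT; done.
- case/andP=> /forallP H /forallP Hu; apply/forallP=> x; apply/implyP; rewrite !inE.
  case/orP=> [/eqP->|xJ]; apply/forallP=> y; apply/implyP; rewrite !inE;
    case/orP=> [/eqP->|yJ].
  + by rewrite irr.
  + exact: (implyP (Hu y) yJ).
  + rewrite sym; exact: (implyP (Hu x) xJ).
  + exact: (implyP (forallP (implyP (H x) xJ) y) yJ).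
Qed.

Lemma indep_unc (J : {set V}) (u : V) : independent e J -> u \in J -> unc J u.
Proof.
move/forallP=> H uJ; apply/forallP=> y; apply/implyP=> yJ.
exact: (implyP (forallP (implyP (H u) uJ) y) yJ).
Qed.

Lemma sum_toggle (f : {set V} -> R) (u : V) :
  \big[Rplus/R0]_(J : {set V}) f J = \big[Rplus/R0]_(J : {set V} | u \notin J) (f J + f (u |: J)).
Proof.
rewrite (bigID (fun J : {set V} => u \in J)) /= Rplus_comm big_split /=; congr (_ + _).
rewrite (reindex_onto (fun J : {set V} => u |: J) (fun J : {set V} => J :\ u)) /=.
- apply: eq_bigl => J; rewrite setU11 /=; apply/eqP/idP.
  + move=> H; apply/negP=> uJ; have : u \in (u |: J) :\ u by rewrite H.
    by rewrite !inE eqxx.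
  + exact: setU1K.
- move=> J uJ; exact: setD1K.
Qed.

Lemma L1 (u : V) :
  \big[Rplus/R0]_(J : {set V} | independent e J && (u \in J)) w J =
  lam * \big[Rplus/R0]_(J : {set V} | independent e J && unc J u && (u \notin J)) w J.
Proof.
rewrite big_mkcond (sum_toggle _ u) big_distrr /=.
rewrite [in RHS](eq_bigl (fun J : {set V} => (u \notin J) && (independent e J && unc J u))); last first.
  by move=> J; rewrite andbC.
rewrite big_mkcondr; apply: eq_bigr => J uJ.
rewrite (negbTE uJ) andbF setU11 andbT indepU1 // /w cardsU1 uJ /=.
by rewrite add0n Rplus_0_l.
Qed.

Lemma L12 (u : V) :
  (1 + lam) * \big[Rplus/R0]_(J : {set V} | independent e J && (u \in J)) w J =
  lam * \big[Rplus/R0]_(J : {set V} | independent e J && unc J u) w J.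
Proof.
rewrite [in RHS](bigID (fun J : {set V} => u \in J)) /= Rmult_plus_distr_l.
rewrite [in RHS](eq_bigl (fun J : {set V} => independent e J && (u \in J))); last first.
  move=> J; case iJ: (independent e J); case uJ: (u \in J); rewrite ?andbF ?andbT //=.
  by rewrite indep_unc.
rewrite -(L1 u) Rmult_plus_distr_r Rmult_1_l Rplus_comm; reflexivity.
Qed.

Hypothesis lam_pos : 0 < lam.
Variable v : V.
Definition cnt (A J : {set V}) := #|[set x | e v x && (x \notin A) && unc J x]|.
Definition disj (J A : {set V}) := [forall x in A, x \notin J].
Definition FF (A : {set V}) := \big[Rplus/R0]_(J : {set V} | independent e J && disj J A)
   (w J * pow (/ (1 + lam)) (cnt A J)).

Lemma cnt_step (A J : {set V}) (u : V) : e v u -> u \notin A ->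
  cnt A J = (unc J u + cnt (u |: A) J)%N.
Proof.
move=> evu uA; rewrite /cnt; case H: (unc J u).
- rewrite (_ : [set x | e v x && (x \notin A) && unc J x] =
     u |: [set x | e v x && (x \notin u |: A) && unc J x]).
    by rewrite cardsU1 !inE eqxx /= andbF.
  apply/setP=> x; rewrite !inE; case: (eqVneq x u) => [->|xu] /=.
    by rewrite evu uA H.
  done.
- apply: eq_card => x; rewrite !inE; case: (eqVneq x u) => [->|xu] /=.
    by rewrite H !andbF.
  done.
Qed.

Lemma cnt_U1 (A J : {set V}) (u : V) : e v u -> cnt A (u |: J) = cnt A J.
Proof.
move=> evu; apply: eq_card => x; rewrite !inE uncU1.
case evx: (e v x) => //=.
have -> : e x u = false by apply/negP => exu; exact: (tf evx exu evu).
done.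
Qed.

Lemma disj_U1l (J A : {set V}) (u : V) : u \notin A -> disj (u |: J) A = disj J A.
Proof.
move=> uA; apply/forallP/forallP => H x; apply/implyP => xA; have := implyP (H x) xA;
  rewrite !inE.
- by case/norP.
- move/negbTE=> ->; rewrite orbF; apply/eqP => xu; move: uA; rewrite -xu xA.
  done.
Qed.

Lemma disj_U1r (J A : {set V}) (u : V) : disj J (u |: A) = (u \notin J) && disj J A.
Proof.
apply/idP/idP.
- move/forallP=> H; apply/andP; split.
    by have := H u; rewrite setU11.
  apply/forallP=> x; apply/implyP=> xA; have := H x; rewrite !inE xA orbT.
  done.
- case/andP=> uJ /forallP H; apply/forallP=> x; apply/implyP; rewrite !inE.
  case/orP=> [/eqP->|xA] //; exact: (implyP (H x) xA).
Qed.

Lemma FF_step (A : {set V}) (u : V) : e v u -> u \notin A -> FF A = FF (u |: A).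
Proof.
move=> evu uA.
rewrite /FF big_mkcond (sum_toggle _ u) [RHS]big_mkcond [RHS](sum_toggle _ u).
apply: eq_bigr => J uJ.
rewrite indepU1 // disj_U1l // cnt_U1 // (cnt_step _ evu uA).
rewrite !disj_U1r setU11 /= uJ /= andbF /w cardsU1 uJ.
case: (independent e J); case: (disj J A); case: (unc J u) => /=;
  rewrite ?Rplus_0_l ?Rplus_0_r ?add0n ?add1n //=.
field; lra.
Qed.

Definition NN := [set x | e v x].
Definition Yv (J : {set V}) := #|[set x | e v x && unc J x]|.

Lemma FF_all n : forall A : {set V}, #|NN :\: A| = n -> A \subset NN -> FF A = FF NN.
Proof.
elim: n => [|n IH] A.
- move=> /eqP; rewrite cards_eq0 setD_eq0 => sNA sAN.
  have -> : A = NN by apply/eqP; rewrite eqEsubset sAN sNA.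
  done.
- move=> Hc sAN.
  have : NN :\: A != set0 by rewrite -card_gt0 Hc.
  case/set0Pn => u; rewrite !inE => /andP [uA evu].
  rewrite (FF_step evu uA); apply: IH.
  + have := cardsD1 u (NN :\: A); rewrite Hc !inE uA evu /= add1n => [[->]].
    apply: eq_card => x; rewrite !inE; case: (eqVneq x u) => //=.
  + apply/subsetP => x; rewrite !inE; case/orP => [/eqP->|xA] //.
    by have := subsetP sAN x xA; rewrite inE.
Qed.

Lemma FF_N : FF NN = \big[Rplus/R0]_(J : {set V} | independent e J && unc J v) w J.
Proof.
rewrite /FF; apply: eq_big => J.
- congr (_ && _); apply/forallP/forallP => H x; apply/implyP => xA.
  + by move: (H x); rewrite inE xA; case: (e v x).
  + rewrite inE in xA; apply: contraTN xA => xJ; exact: (implyP (H x) xJ).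
- move=> _; rewrite (_ : cnt NN J = 0%N) ?Rmult_1_r //.
  apply/eqP; rewrite cards_eq0; apply/eqP/setP => x; rewrite !inE.
  by case: (e v x).
Qed.

Lemma FF_0 : FF set0 = \big[Rplus/R0]_(J : {set V} | independent e J)
   (w J * pow (/ (1 + lam)) (Yv J)).
Proof.
rewrite /FF; apply: eq_big => J.
- rewrite (_ : disj J set0 = true) ?andbT //; apply/forallP => x; by rewrite inE.
- move=> _; congr (_ * pow _ _); apply: eq_card => x; by rewrite !inE andbT.
Qed.

Lemma keyA : (1 + lam) * \big[Rplus/R0]_(J : {set V} | independent e J && (v \in J)) w J =
  lam * \big[Rplus/R0]_(J : {set V} | independent e J) (w J * pow (/ (1 + lam)) (Yv J)).
Proof.
rewrite L12 -FF_N -FF_0 (@FF_all #|NN :\: set0| set0) //.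
exact: sub0set.
Qed.
End Comb.

Lemma big_le (I : finType) (P : pred I) (F G : I -> R) :
  (forall i, P i -> F i <= G i) ->
  \big[Rplus/R0]_(i | P i) F i <= \big[Rplus/R0]_(i | P i) G i.
Proof.
move=> H; apply: (big_ind2 (fun x y => x <= y)) => //.
- exact: Rle_refl.
- by move=> *; apply: Rplus_le_compat.
Qed.

Lemma big_ge0 (I : finType) (P : pred I) (F : I -> R) :
  (forall i, P i -> 0 <= F i) -> 0 <= \big[Rplus/R0]_(i | P i) F i.
Proof.
move=> H; apply: (big_ind (fun x => 0 <= x)) => //.
- exact: Rle_refl.
- by move=> *; apply: Rplus_le_le_0_compat.
Qed.

Lemma INR_sum (I : finType) (P : pred I) (F : I -> nat) :
  INR (\sum_(i | P i) F i) = \big[Rplus/R0]_(i | P i) INR (F i).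
Proof. apply: (big_morph INR (fun x y => plus_INR x y) (erefl (INR 0))). Qed.

Lemma INR_card (I : finType) (P : pred I) :
  INR #|[set x | P x]| = \big[Rplus/R0]_(x | P x) 1.
Proof.
rewrite cardsE -sum1_card INR_sum; apply: eq_bigl => x; by rewrite unfold_in.
Qed.

Lemma sum_const_R (I : finType) (c : R) :
  \big[Rplus/R0]_(i : I) c = INR #|I| * c.
Proof.
transitivity (\big[Rplus/R0]_(i : I) (1 * c)).
  by apply: eq_bigr => i _; rewrite Rmult_1_l.
rewrite -big_distrl /= -(INR_card (fun _ : I => true)); congr (INR _ * _).
by rewrite -cardsT; apply: eq_card => x; rewrite !inE.
Qed.

Lemma pow_exp (q : R) (k : nat) : 0 < q ->
  pow (/ q) k = exp (- (ln q) * INR k).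
Proof.
move=> q0; elim: k => [|k IH].
- by rewrite /= Rmult_0_r exp_0.
- change (pow (/q) k.+1) with (/q * pow (/q) k); rewrite IH S_INR Rmult_plus_distr_l Rmult_1_r exp_plus Rmult_comm; congr (_ * _).
  by rewrite exp_Ropp exp_ln.
Qed.

Lemma tangent (L Y y : R) : exp (- L * y) * (1 - L * (Y - y)) <= exp (- L * Y).
Proof.
have -> : - L * Y = - L * y + (- L * (Y - y)) by ring.
rewrite exp_plus; apply: Rmult_le_compat_l.
- exact: Rlt_le (exp_pos _).
- have := exp_ineq1_le (- L * (Y - y)); lra.
Qed.

Lemma sum_const_P (I : finType) (P : pred I) (c : R) :
  \big[Rplus/R0]_(i | P i) c = INR #|[set i | P i]| * c.
Proof.
transitivity (\big[Rplus/R0]_(i | P i) (1 * c)).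
  by apply: eq_bigr => i _; rewrite Rmult_1_l.
by rewrite -big_distrl /= INR_card.
Qed.

Lemma big_sub (I : finType) (P : pred I) (F G : I -> R) :
  \big[Rplus/R0]_(i | P i) (F i - G i) =
  \big[Rplus/R0]_(i | P i) F i - \big[Rplus/R0]_(i | P i) G i.
Proof.
rewrite /Rminus big_split /=; congr (_ + _).
symmetry; apply: (big_morph Ropp (fun x y => Ropp_plus_distr x y) Ropp_0).
Qed.

Section Glob.
Variables (V : finType) (e : rel V).
Hypothesis sym : forall x y, e x y = e y x.
Hypothesis irr : forall x, e x x = false.
Hypothesis tf : forall x y z, e x y -> e y z -> e x z -> False.
Variable lam : R.
Hypothesis lam_pos : 0 < lam.
Variable d : nat.
Hypothesis Hdeg : forall v, (deg e v <= d)%N.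

Definition WW := \big[Rplus/R0]_(J : {set V} | independent e J) w lam J.
Definition SS := \big[Rplus/R0]_(J : {set V} | independent e J) (INR #|J| * w lam J).
Definition Tsum (x : V) := \big[Rplus/R0]_(J : {set V} | independent e J && (x \in J)) w lam J.
Definition Usum (x : V) := \big[Rplus/R0]_(J : {set V} | independent e J && unc e J x) w lam J.

Lemma S_split : SS = \big[Rplus/R0]_(x : V) Tsum x.
Proof.
rewrite /SS /Tsum.
transitivity (\big[Rplus/R0]_(J : {set V} | independent e J)
   \big[Rplus/R0]_(x : V) (if x \in J then w lam J else 0)).
  apply: eq_bigr => J _.
  have -> : #|J| = #|[set x | x \in J]| by apply: eq_card => x; rewrite inE.
  rewrite INR_card big_distrl /= big_mkcond /=.
  apply: eq_bigr => x _; case: (x \in J) => //; ring.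
rewrite exchange_big /=; apply: eq_bigr => x _.
rewrite [RHS]big_mkcondr /=; done.
Qed.

Lemma B_eq : \big[Rplus/R0]_(v : V) \big[Rplus/R0]_(J : {set V} | independent e J)
    (w lam J * INR (Yv e v J)) = \big[Rplus/R0]_(x : V) (INR (deg e x) * Usum x).
Proof.
transitivity (\big[Rplus/R0]_(v : V) \big[Rplus/R0]_(x : V)
   (if e v x then Usum x else 0)).
  apply: eq_bigr => v _.
  transitivity (\big[Rplus/R0]_(J : {set V} | independent e J)
      \big[Rplus/R0]_(x : V) (if e v x then (if unc e J x then w lam J else 0) else 0)).
    apply: eq_bigr => J _; rewrite /Yv INR_card big_distrr /= big_mkcond /=.
    apply: eq_bigr => x _; case: (e v x); case: (unc e J x) => /=; ring.
  rewrite exchange_big /=; apply: eq_bigr => x _.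
  case: (e v x).
  + by rewrite /Usum big_mkcondr.
  + by rewrite big1.
rewrite exchange_big /=; apply: eq_bigr => x _.
rewrite -big_mkcond /= sum_const_P.
congr (INR _ * _).
rewrite /deg; apply: eq_card => y; by rewrite !inE sym.
Qed.

Lemma w_ge0 (J : {set V}) : 0 <= w lam J.
Proof. apply: pow_le; lra. Qed.

Lemma Tsum_ge0 x : 0 <= Tsum x.
Proof. apply: big_ge0 => J _; exact: w_ge0. Qed.

Lemma qS_eq : (1 + lam) * SS = lam * \big[Rplus/R0]_(v : V)
   \big[Rplus/R0]_(J : {set V} | independent e J) (w lam J * pow (/ (1 + lam)) (Yv e v J)).
Proof.
rewrite S_split !big_distrr /=; apply: eq_bigr => v _.
exact: keyA.
Qed.

Lemma lamB : lam * \big[Rplus/R0]_(v : V) \big[Rplus/R0]_(J : {set V} | independent e J)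
    (w lam J * INR (Yv e v J)) <= (1 + lam) * INR d * SS.
Proof.
rewrite B_eq big_distrr S_split Rmult_assoc big_distrr big_distrr /=.
apply: big_le => x _.
have -> : lam * (INR (deg e x) * Usum x) = INR (deg e x) * (lam * Usum x) by ring.
rewrite /Usum -L12 // -/(Tsum x).
have := Tsum_ge0 x; have : INR (deg e x) <= INR d by apply: le_INR; apply/leP.
move=> h1 h2.
have : INR (deg e x) * ((1 + lam) * Tsum x) <= INR d * ((1 + lam) * Tsum x).
  apply: Rmult_le_compat_r => //; apply: Rmult_le_pos => //; lra.
lra.
Qed.

Lemma Gbound (y : R) :
  lam * y * INR #|V| * WW <= (1 + lam) * INR d * SS \/
  lam * exp (- ln (1 + lam) * y) * INR #|V| * WW <= (1 + lam) * SS.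
Proof.
set L := ln (1 + lam); set E := exp (- L * y).
set X := \big[Rplus/R0]_(v : V) \big[Rplus/R0]_(J : {set V} | independent e J)
   (w lam J * pow (/ (1 + lam)) (Yv e v J)).
set B := \big[Rplus/R0]_(v : V) \big[Rplus/R0]_(J : {set V} | independent e J)
    (w lam J * INR (Yv e v J)).
have hq := qS_eq; have hB := lamB; rewrite -/X in hq; rewrite -/B in hB.
have hL : 0 < L by rewrite /L -ln_1; apply: ln_increasing; lra.
have hE : 0 < E by apply: exp_pos.
have hX : E * (1 + L * y) * (INR #|V| * WW) - E * L * B <= X.
  have -> : E * (1 + L * y) * (INR #|V| * WW) - E * L * B =
    \big[Rplus/R0]_(v : V) \big[Rplus/R0]_(J : {set V} | independent e J)
      (E * (1 + L * y) * w lam J - E * L * (w lam J * INR (Yv e v J))).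
    rewrite (eq_bigr (fun v => \big[Rplus/R0]_(J : {set V} | independent e J)
      (E * (1 + L * y) * w lam J) - \big[Rplus/R0]_(J : {set V} | independent e J)
      (E * L * (w lam J * INR (Yv e v J))))); last by move=> v _; rewrite big_sub.
    rewrite big_sub; congr (_ - _).
      rewrite (eq_bigr (fun v => E * (1 + L * y) * WW)); last first.
        by move=> v _; rewrite /WW big_distrr.
      rewrite sum_const_R; ring.
    rewrite /B big_distrr /=; apply: eq_bigr => v _; by rewrite big_distrr.
  apply: big_le => v _; apply: big_le => J _.
  rewrite pow_exp; last lra.
  have := tangent L (INR (Yv e v J)) y; rewrite -/L -/E => h.
  have hw := w_ge0 J.
  have : w lam J * (E * (1 - L * (INR (Yv e v J) - y))) <=
     w lam J * exp (- L * INR (Yv e v J)) by apply: Rmult_le_compat_l.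
  move=> h2; rewrite /L; rewrite /L in h2.
  have -> : E * (1 + L * y) * w lam J - E * L * (w lam J * INR (Yv e v J)) =
     w lam J * (E * (1 - L * (INR (Yv e v J) - y))) by ring.
  exact: h2.
have hW : 0 <= WW by apply: big_ge0 => J _; exact: w_ge0.
have hn : 0 <= INR #|V| by apply: pos_INR.
destruct (Rle_lt_dec (lam * y * INR #|V| * WW) ((1 + lam) * INR d * SS)) as [h|h].
  by left.
right.
have h3 : E * L * (lam * B) <= E * L * (lam * y * INR #|V| * WW).
  apply: Rmult_le_compat_l; first by apply: Rmult_le_pos; lra.
  lra.
have h4 : lam * (E * (1 + L * y) * (INR #|V| * WW) - E * L * B) <= lam * X.
  by apply: Rmult_le_compat_l; lra.
rewrite -/L -/E; lra.
Qed.
End Glob.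

Lemma term_ge0 (l1 l2 : R) (j k : nat) : 0 < l1 -> l1 <= l2 ->
  0 <= (INR j - INR k) * (pow l2 j * pow l1 k - pow l1 j * pow l2 k).
Proof.
move=> h1 h12.
have key : forall m k : nat, 0 <= pow l2 (k + m) * pow l1 k - pow l1 (k + m) * pow l2 k.
  move=> m k'; rewrite !pow_add.
  have : pow l1 m <= pow l2 m by apply: pow_incr; lra.
  have : 0 <= pow l1 k' * pow l2 k' by apply: Rmult_le_pos; apply: pow_le; lra.
  move=> a b.
  have -> : pow l2 k' * pow l2 m * pow l1 k' - pow l1 k' * pow l1 m * pow l2 k' =
    (pow l1 k' * pow l2 k') * (pow l2 m - pow l1 m) by ring.
  apply: Rmult_le_pos => //; lra.
case: (leqP k j) => hkj.
- have [m ->] : exists m, j = (k + m)%N by exists (j - k)%N; rewrite subnKC.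
  apply: Rmult_le_pos; last exact: key.
  rewrite plus_INR; have := pos_INR m; lra.
- have [m ->] : exists m, k = (j + m)%N by exists (k - j)%N; rewrite subnKC // ltnW.
  have := key m j.
  rewrite plus_INR; have := pos_INR m => hm hk.
  have -> : (INR j - (INR j + INR m)) * (pow l2 j * pow l1 (j + m) - pow l1 j * pow l2 (j + m))
     = INR m * (pow l2 (j + m) * pow l1 j - pow l1 (j + m) * pow l2 j) by ring.
  by apply: Rmult_le_pos.
Qed.

Lemma WW_pos (V : finType) (e : rel V) (l : R) : 0 < l ->
  0 < \big[Rplus/R0]_(J : {set V} | independent e J) pow l #|J|.
Proof.
move=> hl.
have i0 : independent e set0 by apply/forallP => x; rewrite inE.
rewrite (bigD1 set0) //= cards0 /=.
apply: Rplus_lt_le_0_compat; first lra.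
by apply: big_ge0 => J _; apply: pow_le; lra.
Qed.

Lemma mono (V : finType) (e : rel V) (l1 l2 : R) : 0 < l1 -> l1 <= l2 ->
  avg_alpha e l1 <= avg_alpha e l2.
Proof.
move=> h1 h12.
rewrite /avg_alpha /lam_dindep_poly /indep_poly.
set S1 := \big[Rplus/R0]_(J : {set V} | independent e J) (INR #|J| * pow l1 #|J|).
set S2 := \big[Rplus/R0]_(J : {set V} | independent e J) (INR #|J| * pow l2 #|J|).
set W1 := \big[Rplus/R0]_(J : {set V} | independent e J) pow l1 #|J|.
set W2 := \big[Rplus/R0]_(J : {set V} | independent e J) pow l2 #|J|.
have hW1 : 0 < W1 by apply: WW_pos.
have hW2 : 0 < W2 by apply: WW_pos; lra.
have P1 : S2 * W1 - S1 * W2 = \big[Rplus/R0]_(J : {set V} | independent e J)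
   \big[Rplus/R0]_(K : {set V} | independent e K)
   (INR #|J| * pow l2 #|J| * pow l1 #|K| - INR #|J| * pow l1 #|J| * pow l2 #|K|).
  rewrite /S1 /S2 /W1 /W2 !big_distrlr /= -big_sub; apply: eq_bigr => J _.
  rewrite -big_sub; apply: eq_bigr => K _; ring.
have P2 : S2 * W1 - S1 * W2 = \big[Rplus/R0]_(J : {set V} | independent e J)
   \big[Rplus/R0]_(K : {set V} | independent e K)
   (INR #|K| * pow l2 #|K| * pow l1 #|J| - INR #|K| * pow l1 #|K| * pow l2 #|J|).
  by rewrite P1 exchange_big.
have : 0 <= 2 * (S2 * W1 - S1 * W2).
  have -> : 2 * (S2 * W1 - S1 * W2) = (S2 * W1 - S1 * W2) + (S2 * W1 - S1 * W2) by ring.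
  rewrite {1}P1 P2 -big_split /=; apply: big_ge0 => J _.
  rewrite -big_split /=; apply: big_ge0 => K _.
  have := term_ge0 #|J| #|K| h1 h12.
  match goal with |- 0 <= ?A -> 0 <= ?B => have -> : B = A by ring end.
  done.
move=> h.
have hS : S1 * W2 <= S2 * W1 by lra.
apply: (Rmult_le_reg_r (W1 * W2)); first by apply: Rmult_lt_0_compat.
have -> : S1 / W1 * (W1 * W2) = S1 * W2 by field; lra.
have -> : S2 / W2 * (W1 * W2) = S2 * W1 by field; lra.
done.
Qed.

Lemma exp_pow_nat (x : R) (n : nat) : pow (exp x) n = exp (INR n * x).
Proof.
elim: n => [|n IH]; first by rewrite /= Rmult_0_l exp_0.
change (pow (exp x) n.+1) with (exp x * pow (exp x) n).
by rewrite IH S_INR Rmult_plus_distr_r Rmult_1_l exp_plus Rmult_comm.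
Qed.

Lemma ln1p_le (x : R) : 0 < x -> ln (1 + x) <= x.
Proof.
move=> hx; destruct (Rle_or_lt (ln (1 + x)) x) as [h|h] => //.
have := exp_increasing _ _ h; rewrite exp_ln; last lra.
have := exp_ineq1_le x; lra.
Qed.

Lemma exp_small (a : R) : 0 <= a -> a < 1 -> exp (a * (1 - a)) <= 1 + a.
Proof.
move=> h0 h1.
have h2 := exp_ineq1_le (- (a * (1 - a))).
have hp : 0 < 1 - a + a * a by nra.
have hE : exp (a * (1 - a)) * exp (- (a * (1 - a))) = 1.
  by rewrite -exp_plus Rplus_opp_r exp_0.
have he := exp_pos (a * (1 - a)).
have he2 := exp_pos (- (a * (1 - a))).
nra.
Qed.

Lemma F1 (d : nat) (lam a : R) : is_alpha_T d lam a ->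
  a * exp (INR d * (a * (1 - a))) <= lam.
Proof.
case=> [[ha0 ha1] ->].
set r := (1 - a) / (1 - 2 * a).
have hr : 1 + a <= r.
  rewrite /r; apply: (Rmult_le_reg_r (1 - 2 * a)); first lra.
  field_simplify; [nra | lra].
have hpow : exp (INR d * (a * (1 - a))) <= pow r d.
  rewrite -exp_pow_nat; apply: pow_incr; split; first exact: Rlt_le (exp_pos _).
  have := exp_small (Rlt_le _ _ ha0) (ltac:(lra) : a < 1); lra.
have hq : a <= a / (1 - a).
  apply: (Rmult_le_reg_r (1 - a)); first lra.
  field_simplify; [nra | lra].
have := exp_pos (INR d * (a * (1 - a))).
have : 0 <= a / (1 - a) by apply: Rlt_le; apply: Rdiv_lt_0_compat; lra.
nra.
Qed.

Lemma F2 (d : nat) (lam a : R) : is_alpha_T d lam a -> a <= / 4 ->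
  lam <= 2 * a * exp (2 * INR d * a).
Proof.
case=> [[ha0 ha1] ->] ha4.
set r := (1 - a) / (1 - 2 * a).
have hr0 : 0 <= r by apply: Rlt_le; apply: Rdiv_lt_0_compat; lra.
have hr : r <= exp (2 * a).
  have := exp_ineq1_le (2 * a).
  have : r <= 1 + 2 * a.
    rewrite /r; apply: (Rmult_le_reg_r (1 - 2 * a)); first lra.
    field_simplify; [nra | lra].
  lra.
have hpow : pow r d <= exp (2 * INR d * a).
  have -> : 2 * INR d * a = INR d * (2 * a) by ring.
  rewrite -exp_pow_nat; apply: pow_incr; lra.
have hq : a / (1 - a) <= 2 * a.
  apply: (Rmult_le_reg_r (1 - a)); first lra.
  field_simplify; [nra | lra].
have : 0 <= a / (1 - a) by apply: Rlt_le; apply: Rdiv_lt_0_compat; lra.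
have := pow_le _ d hr0.
have := exp_pos (2 * INR d * a).
nra.
Qed.

Lemma exp_le_mono (x y : R) : x <= y -> exp x <= exp y.
Proof.
move=> h; case: (Rle_lt_or_eq_dec _ _ h) => [h1|->]; last lra.
exact: Rlt_le (exp_increasing _ _ h1).
Qed.

Lemma exp_inv_bound (a X lam : R) : a * exp X <= lam -> a <= lam * exp (- X).
Proof.
move=> h.
have hE : exp X * exp (- X) = 1 by rewrite -exp_plus Rplus_opp_r exp_0.
have -> : a = a * exp X * exp (- X) by rewrite Rmult_assoc hE Rmult_1_r.
rewrite Rmult_assoc hE Rmult_1_r.
have -> : a = a * exp X * exp (- X) by rewrite Rmult_assoc hE Rmult_1_r.
apply: Rmult_le_compat_r => //; exact: Rlt_le (exp_pos _).
Qed.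

Lemma case1 (lam del a dd : R) : 0 < lam -> lam <= del / 4 -> 0 < del <= 1 -> 0 < a -> a < / 2 ->
  0 <= dd -> a * exp (dd * (a * (1 - a))) <= lam ->
  (1 + lam) * (1 - del) * a <= lam * exp (- ln (1 + lam) * (dd * (1 - del) * a * (1 + lam) / lam)).
Proof.
move=> hl hld hd ha ha2 hdd hF.
have hX : 0 <= dd * (a * (1 - a)) by apply: Rmult_le_pos => //; nra.
have hal : a <= lam.
  have := exp_ineq1_le (dd * (a * (1 - a))).
  have := exp_pos (dd * (a * (1 - a))); nra.
have hL := ln1p_le hl.
have hL0 : 0 <= ln (1 + lam).
  rewrite -ln_1; apply: Rlt_le; apply: ln_increasing; lra.
set y := dd * (1 - del) * a * (1 + lam) / lam.
have hy : lam * y = dd * (1 - del) * a * (1 + lam) by rewrite /y; field; lra.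
have hy0 : 0 <= y.
  rewrite /y; apply: Rmult_le_pos; last by apply: Rlt_le; apply: Rinv_0_lt_compat.
  apply: Rmult_le_pos; last lra.
  apply: Rmult_le_pos; last lra.
  apply: Rmult_le_pos => //; lra.
have h1 : ln (1 + lam) * y <= dd * (a * (1 - a)).
  have : ln (1 + lam) * y <= lam * y by apply: Rmult_le_compat_r.
  have : (1 - del) * (1 + lam) <= 1 - a by nra.
  move=> h2 h3; rewrite hy in h3.
  have : dd * a * ((1 - del) * (1 + lam)) <= dd * a * (1 - a).
    apply: Rmult_le_compat_l => //; nra.
  nra.
have h2 : exp (- dd * (a * (1 - a))) <= exp (- ln (1 + lam) * y).
  apply: exp_le_mono; lra.
have h3 := exp_inv_bound hF.
have h4 : lam * exp (- (dd * (a * (1 - a)))) <= lam * exp (- ln (1 + lam) * y).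
  apply: Rmult_le_compat_l; first lra.
  by rewrite Ropp_mult_distr_l.
have : (1 + lam) * (1 - del) <= 1 by nra.
nra.
Qed.

Lemma case2 (del a dd C lam : R) : 0 < del <= 1 -> 0 < a -> a <= del / 4 -> 0 < C ->
  16 * C / (del * del) <= dd * a -> a * exp (dd * (a * (1 - a))) <= lam -> lam <= C ->
  0 <= dd ->
  (1 + del / 4) * (1 - del) * a <=
  del / 4 * exp (- ln (1 + del / 4) * (dd * (1 - del) * a * (1 + del / 4) / (del / 4))).
Proof.
move=> hd ha had hC hT hF hlC hdd.
set l0 := del / 4.
have hl0 : 0 < l0 by rewrite /l0; lra.
have hL := ln1p_le hl0.
have hL0 : 0 <= ln (1 + l0).
  rewrite -ln_1; apply: Rlt_le; apply: ln_increasing; lra.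
set y := dd * (1 - del) * a * (1 + l0) / l0.
have hy : l0 * y = dd * (1 - del) * a * (1 + l0) by rewrite /y; field; lra.
have hy0 : 0 <= y.
  rewrite /y; apply: Rmult_le_pos; last by apply: Rlt_le; apply: Rinv_0_lt_compat.
  apply: Rmult_le_pos; last lra.
  apply: Rmult_le_pos; last lra.
  apply: Rmult_le_pos => //; lra.
set X := dd * (a * (1 - a)).
have hda : 0 <= dd * a by apply: Rmult_le_pos; lra.
have h1 : ln (1 + l0) * y <= X - dd * a * del / 2.
  have : ln (1 + l0) * y <= l0 * y by apply: Rmult_le_compat_r.
  have : (1 - del) * (1 + l0) <= 1 - a - del / 2 by rewrite /l0; nra.
  move=> h2 h3; rewrite hy in h3.
  have : dd * a * ((1 - del) * (1 + l0)) <= dd * a * (1 - a - del / 2).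
    by apply: Rmult_le_compat_l.
  rewrite /X; nra.
have h2 : exp (- X + dd * a * del / 2) <= exp (- ln (1 + l0) * y).
  apply: exp_le_mono; lra.
have h3 := exp_inv_bound hF; rewrite -/X in h3.
have hEX := exp_pos (- X).
have h4 : a <= C * exp (- X).
  apply: (Rle_trans _ _ _ h3); apply: Rmult_le_compat_r; lra.
have h5 : 8 * C / del <= exp (dd * a * del / 2).
  have := exp_ineq1_le (dd * a * del / 2).
  have : 16 * C / (del * del) * del <= dd * a * del by apply: Rmult_le_compat_r; lra.
  have -> : 16 * C / (del * del) * del = 2 * (8 * C / del) by field; lra.
  lra.
have h6 : exp (- X + dd * a * del / 2) = exp (- X) * exp (dd * a * del / 2) by rewrite exp_plus.
have h7 : C * exp (- X) * (8 * C / del) <= C * exp (- X) * exp (dd * a * del / 2).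
  apply: Rmult_le_compat_l => //; apply: Rmult_le_pos; lra.
have h8 : a * (8 * C / del) <= C * exp (- X) * (8 * C / del).
  apply: Rmult_le_compat_r => //; apply: Rlt_le; apply: Rdiv_lt_0_compat; lra.
have h9 : a * (8 / del) <= exp (- X) * exp (dd * a * del / 2).
  apply: (Rmult_le_reg_l C) => //.
  have -> : C * (a * (8 / del)) = a * (8 * C / del) by field; lra.
  nra.
have h10 : l0 * (a * (8 / del)) = 2 * a by rewrite /l0; field; lra.
have h11 : l0 * (a * (8 / del)) <= l0 * exp (- ln (1 + l0) * y).
  apply: Rmult_le_compat_l; lra.
have : (1 + l0) * (1 - del) <= 2 by rewrite /l0; nra.
nra.
Qed.

Lemma Galpha (V : finType) (e : rel V) (sym : forall x y, e x y = e y x)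
  (irr : forall x, e x x = false) (tf : forall x y z, e x y -> e y z -> e x z -> False)
  (lam : R) (hl : 0 < lam) (d : nat) (Hdeg : forall v, (deg e v <= d)%N)
  (hn : 0 < INR #|V|) (hd : 0 < INR d) (y : R) :
  lam * y <= (1 + lam) * INR d * (/ INR #|V| * avg_alpha e lam) \/
  lam * exp (- ln (1 + lam) * y) <= (1 + lam) * (/ INR #|V| * avg_alpha e lam).
Proof.
have hW : 0 < WW e lam by apply: WW_pos.
have hA : avg_alpha e lam = SS e lam / WW e lam by [].
rewrite hA.
have hnW : 0 < INR #|V| * WW e lam by apply: Rmult_lt_0_compat.
case: (Gbound sym irr tf hl Hdeg y) => h; [left|right];
  apply: (Rmult_le_reg_r (INR #|V| * WW e lam)) => //.
- have -> : (1 + lam) * INR d * (/ INR #|V| * (SS e lam / WW e lam)) * (INR #|V| * WW e lam)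
     = (1 + lam) * INR d * SS e lam by field; lra.
  lra.
- have -> : (1 + lam) * (/ INR #|V| * (SS e lam / WW e lam)) * (INR #|V| * WW e lam)
     = (1 + lam) * SS e lam by field; lra.
  lra.
Qed.

Lemma core (C del : R) : 1 <= C -> 0 < del <= 1 ->
  exists D : nat, forall d : nat, (D <= d)%N -> (2 <= d)%N ->
  forall lam, 0 < lam -> lam <= C ->
  forall (V : finType) (e : rel V),
    simple_graph e -> triangle_free e -> max_degree_eq e d ->
    forall a : R, is_alpha_T d lam a ->
      (1 - del) * a <= / INR #|V| * avg_alpha e lam.
Proof.
move=> hC hdel.
set T := 16 * C / (del * del).
have hT : 0 < T by rewrite /T; apply: Rdiv_lt_0_compat; nra.
have hE2 := exp_pos (2 * T).
have [D hD] := INR_unbounded (32 * C / (del * del) + 8 * T * exp (2 * T) / del).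
have hb1 : 0 < 32 * C / (del * del) by apply: Rdiv_lt_0_compat; nra.
have hb2 : 0 < 8 * T * exp (2 * T) / del by apply: Rdiv_lt_0_compat; nra.
exists D => d hDd hd2 lam hl hlC V e [sym irr] tf [Hdeg [v0 _]] a ha.
have hdD : INR D <= INR d by apply: le_INR; apply/leP.
have hd : 0 < INR d by lra.
have hn : 0 < INR #|V|.
  apply: lt_0_INR; apply/ltP; apply/card_gt0P; by exists v0.
have [[ha0 ha2] _] := ha.
have hF := F1 ha.
set X := INR d * (a * (1 - a)) in hF.
have hX0 : 0 <= X by rewrite /X; apply: Rmult_le_pos; [lra | nra].
have hEX := exp_ineq1_le X.
have had : a <= del / 4.
  destruct (Rle_or_lt a (del / 4)) as [h|h] => //.
  exfalso.
  have h1 : a * (1 + X) <= C by nra.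
  have h2 : INR d * (a * a) / 2 <= C by rewrite /X in h1; nra.
  have h3 : 32 * C / (del * del) * (del * del) = 32 * C by field; lra.
  have h4 : 32 * C / (del * del) * (del * del) < INR d * (del * del)
    by apply: Rmult_lt_compat_r; nra.
  have h5 : del * del <= 16 * (a * a) by nra.
  nra.
destruct (Rle_or_lt lam (del / 4)) as [hsm|hbig].
- set y := INR d * (1 - del) * a * (1 + lam) / lam.
  have := case1 hl hsm hdel ha0 ha2 (Rlt_le _ _ hd) hF; rewrite -/y => hc.
  case: (Galpha sym irr tf hl Hdeg hn hd y) => h.
  + have hy : lam * y = (1 + lam) * INR d * ((1 - del) * a) by rewrite /y; field; lra.
    rewrite hy in h; apply: (Rmult_le_reg_l ((1 + lam) * INR d)) => //.
    apply: Rmult_lt_0_compat; lra.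
  + apply: (Rmult_le_reg_l (1 + lam)); first lra.
    rewrite -Rmult_assoc; lra.
- set l0 := del / 4.
  have hl0 : 0 < l0 by rewrite /l0; lra.
  have hda : T <= INR d * a.
    destruct (Rle_or_lt T (INR d * a)) as [h|h] => //.
    exfalso.
    have h1 := F2 ha (ltac:(lra) : a <= / 4).
    have h2 : exp (2 * INR d * a) <= exp (2 * T) by apply: exp_le_mono; lra.
    have h3 : lam <= 2 * a * exp (2 * T).
      apply: (Rle_trans _ _ _ h1); apply: Rmult_le_compat_l; lra.
    have h4 : INR d * (del / 4) < INR d * lam by apply: Rmult_lt_compat_l.
    have h5 : INR d * lam <= 2 * (INR d * a) * exp (2 * T) by nra.
    have h6 : 2 * (INR d * a) * exp (2 * T) <= 2 * T * exp (2 * T) by nra.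
    have h7 : 8 * T * exp (2 * T) / del * del = 8 * T * exp (2 * T) by field; lra.
    have h8 : 8 * T * exp (2 * T) / del * del < INR d * del by apply: Rmult_lt_compat_r; lra.
    nra.
  have hc := case2 hdel ha0 had (ltac:(lra) : 0 < C) hda hF hlC (Rlt_le _ _ hd).
  have hmono : / INR #|V| * avg_alpha e l0 <= / INR #|V| * avg_alpha e lam.
    apply: Rmult_le_compat_l; first by apply: Rlt_le; apply: Rinv_0_lt_compat.
    apply: mono => //; rewrite /l0; lra.
  apply: (Rle_trans _ _ _ _ hmono).
  set y := INR d * (1 - del) * a * (1 + l0) / l0.
  rewrite -/l0 -/y in hc.
  case: (Galpha sym irr tf hl0 Hdeg hn hd y) => h.
  + have hy : l0 * y = (1 + l0) * INR d * ((1 - del) * a) by rewrite /y; field; lra.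
    rewrite hy in h; apply: (Rmult_le_reg_l ((1 + l0) * INR d)) => //.
    apply: Rmult_lt_0_compat; lra.
  + apply: (Rmult_le_reg_l (1 + l0)); first lra.
    rewrite -Rmult_assoc; lra.
Qed.

Lemma avg_ge0 (V : finType) (e : rel V) (l : R) : 0 < l -> 0 <= avg_alpha e l.
Proof.
move=> hl; rewrite /avg_alpha /Rdiv; apply: Rmult_le_pos.
- apply: big_ge0 => J _; apply: Rmult_le_pos; [exact: pos_INR | apply: pow_le; lra].
- apply: Rlt_le; apply: Rinv_0_lt_compat; exact: WW_pos.
Qed.

Unset Implicit Arguments.
Theorem proposition4p1 (lam : nat -> R)
  (lam_pos : forall d : nat, (0 < lam d))
  (lam_bdd : exists C : R, forall d : nat, (lam d <= C)) :
  exists eps : nat -> R,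
    Un_cv eps 0 /\
    forall (d : nat), (2 <= d)%N ->
    forall (V : finType) (e : rel V),
      simple_graph e -> triangle_free e -> max_degree_eq e d ->
      forall a : R, is_alpha_T d (lam d) a ->
        (/ INR #|V| * avg_alpha e (lam d) >= (1 - eps d) * a).
Proof.
case: lam_bdd => C0 hC0.
set C := Rmax C0 1.
have hC : 1 <= C by apply: Rmax_r.
have hlC : forall d, lam d <= C by move=> d; apply: (Rle_trans _ _ _ (hC0 d)); apply: Rmax_l.
pose Q (k D : nat) := forall d : nat, (D <= d)%N -> (2 <= d)%N ->
  forall (V : finType) (e : rel V),
    simple_graph e -> triangle_free e -> max_degree_eq e d ->
    forall a : R, is_alpha_T d (lam d) a ->
      (1 - / (INR k + 1)) * a <= / INR #|V| * avg_alpha e (lam d).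
have hex : forall k, exists D, Q k D.
  move=> k.
  have hk : 0 < INR k + 1 by have := pos_INR k; lra.
  have hdel : 0 < / (INR k + 1) <= 1.
    split; first by apply: Rinv_0_lt_compat.
    rewrite -Rinv_1; apply: Rinv_le_contravar; first lra.
    have := pos_INR k; lra.
  have [D hD] := core hC hdel.
  exists D => d hDd hd2 V e hs ht hm a ha.
  exact: (hD d hDd hd2 (lam d) (lam_pos d) (hlC d) V e hs ht hm a ha).
have [Df hDf] : exists Df : nat -> nat, forall k, Q k (Df k).
  exists (fun k => proj1_sig (constructive_indefinite_description _ (hex k))).
  move=> k; exact: (proj2_sig (constructive_indefinite_description _ (hex k))).
pose P (d : nat) := [pred k : 'I_d.+1 | (nat_of_ord k == 0%N) || (Df k <= d)%N].
pose K (d : nat) := (\max_(k in P d) nat_of_ord k)%N.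
have KP : forall d, (K d == 0%N) || (Df (K d) <= d)%N.
  move=> d.
  have hA : (0 < #|P d|)%N by apply/card_gt0P; exists ord0; rewrite inE.
  rewrite /K; have [i0 iP ->] := eq_bigmax_cond (fun k : 'I_d.+1 => nat_of_ord k) hA.
  by move: iP; rewrite inE.
exists (fun d => / (INR (K d) + 1)); split.
- move=> eps heps.
  have [m hm] := INR_unbounded (/ eps).
  exists (maxn m (Df m)) => n hn.
  have hn' : (maxn m (Df m) <= n)%N by apply/leP.
  have hmn : (m < n.+1)%N by rewrite ltnS; apply: leq_trans hn'; apply: leq_maxl.
  have hDn : (Df m <= n)%N by apply: leq_trans hn'; apply: leq_maxr.
  have hK : (m <= K n)%N.
    have H := @leq_bigmax_cond _ (P n) (fun k : 'I_n.+1 => nat_of_ord k) (Ordinal hmn).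
    apply: H; by rewrite /P /= hDn orbT.
  have hKR : INR m <= INR (K n) by apply: le_INR; apply/leP.
  have hm0 : 0 < INR m + 1 by have := pos_INR m; lra.
  have hK0 : 0 < INR (K n) + 1 by have := pos_INR (K n); lra.
  rewrite /R_dist Rminus_0_r Rabs_pos_eq; last by apply: Rlt_le; apply: Rinv_0_lt_compat.
  apply: (Rle_lt_trans _ (/ (INR m + 1))).
    apply: Rinv_le_contravar => //; lra.
  rewrite -(Rinv_inv eps); apply: Rinv_lt_contravar.
    apply: Rmult_lt_0_compat => //; by apply: Rinv_0_lt_compat.
  lra.
- move=> d hd2 V e hs ht hm a ha; apply: Rle_ge.
  case/orP: (KP d) => [/eqP -> | hD].
  + have [[ha0 _] _] := ha.
    rewrite /= Rplus_0_l Rinv_1 Rminus_diag Rmult_0_l.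
    apply: Rmult_le_pos; last exact: avg_ge0.
    case: hm => _ [v0 _].
    apply: Rlt_le; apply: Rinv_0_lt_compat; apply: lt_0_INR; apply/ltP; apply/card_gt0P.
    by exists v0.
  + exact: (hDf (K d) d hD hd2 V e hs ht hm a ha).
Qed.
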